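(* Let $k,r\in\mathbb N$ with $r\ge2$, and let $H_1,\dots,H_r$ be graphs, $\mathbf H=(H_i)_{i\in[r]}$. Then $\mathcal B(\mathbf H)\subset\mathcal B'(\mathbf H)$.
   Context: Constants: $\delta=r^{-50}$, $p=\frac1{2^{25}k^2r^4}$. Hypergraphs are identified with their edge sets; $\mathcal G[S]=\{E\in\mathcal G:E\subset S\}$. For $\nu:\mathcal G\to\mathbb R_{\ge0}$: $e(\nu)=\sum_E\nu(E)$, $d_\nu(L)=\sum_{E\in\mathcal G,L\subset E}\nu(E)$, $\Lambda_p(\nu)=\sum_{L\subset V(\mathcal G),|L|\ge2}d_\nu(L)^2p^{-|L|}$. For $R>0$, $\mathcal G$ is $(p,R)$-Janson if some $\nu:\mathcal G\to\mathbb R_{\ge0}$ has $\Lambda_p(\nu)<e(\nu)^2/R$. For graphs $F,G$ and $G'\subset G$, $\mathfrak I_{F,G',G}$ is the hypergraph on $V(G)$ whose edges are the sets $L\subset V(G)$ with $G'[L]=G[L]\cong F$. For a colouring $c$ of edges with colours in $[r]$, $G_i$ is the subgraph of edges of colour $i$. $\mathcal B(\mathbf H)$ is the family of graphs $G$ for which some colouring $c:E(G)\to[r]$ makes $\mathfrak I_{H_i,G_i,G}$ not $(p,p\,v(G))$-Janson for every $i\in[r]$. $\mathcal B'(\mathbf H)$ is the family of graphs $G$ for which there exist $S\subset V(G)$ with $|S|\ge\delta^{2/3}v(G)$ and a colouring $c:E(G[S])\to[r]$ such that $\mathfrak I_{H_i,G_i,G}[S]$ is not $(p,2^{-9}r^{-1}\delta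 p\,v(G))$-Janson for every $i\in[r]$. *)

(* Defs.v *)
From HB Require Import structures.
From mathcomp Require Import all_boot all_order all_algebra.
From mathcomp Require Import reals exp.
Set Implicit Arguments. Unset Strict Implicit. Unset Printing Implicit Defensive.
Import Order.TTheory GRing.Theory Num.Theory.
Local Open Scope ring_scope.

Record sgraph := SGraph {
  sV : finType;
  sadj : rel sV;
  sadj_sym : symmetric sadj;
  sadj_irr : irreflexive sadj }.
Arguments sadj : clear implicits.

Definition vnum (G : sgraph) : nat := #|sV G|.

Definition hypergraph (V : finType) := {set V} -> Prop.

Definition hrestr (V : finType) (Gh : hypergraph V) (S : {set V}) : hypergraph V :=
  fun E => Gh E /\ E \subset S.

Section Janson.
Variables (R : realType) (V : finType).

(* weights nu : G -> R_{>=0}, represented as functions on {set V}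
   vanishing outside the edge set *)
Definition hweight (Gh : hypergraph V) (nu : {set V} -> R) : Prop :=
  (forall E, 0 <= nu E) /\ (forall E, ~ Gh E -> nu E = 0).

Definition e_nu (nu : {set V} -> R) : R := \sum_(E : {set V}) nu E.

Definition d_nu (nu : {set V} -> R) (L : {set V}) : R :=
  \sum_(E : {set V} | L \subset E) nu E.

Definition Lambda (p : R) (nu : {set V} -> R) : R :=
  \sum_(L : {set V} | (2 <= #|L|)%N) (d_nu nu L) ^+ 2 * p ^- #|L|.

Definition janson (p Rj : R) (Gh : hypergraph V) : Prop :=
  exists nu : {set V} -> R,
    hweight Gh nu /\ Lambda p nu < (e_nu nu) ^+ 2 / Rj.
End Janson.

Definition induced_iso (F : sgraph) (V : finType) (adj : rel V) (L : {set V}) :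
  Prop :=
  exists f : sV F -> V,
    injective f /\ f @: [set: sV F] = L /\
    (forall u v, sadj F u v = adj (f u) (f v)).

Definition Ihyp (F : sgraph) (V : finType) (adj' adj : rel V) : hypergraph V :=
  fun L =>
    (forall x y, x \in L -> y \in L -> adj' x y = adj x y) /\
    induced_iso F adj L.

Definition delta (R : realType) (r : nat) : R := (r%:R ^+ 50)^-1.
Definition pconst (R : realType) (k r : nat) : R :=
  (2 ^+ 25 * k%:R ^+ 2 * r%:R ^+ 4)^-1.

(* Colourings c : E(G) -> [r] are represented by functions on {set V},
   applied to the 2-set {x,y} of an edge xy (values elsewhere irrelevant).
   G_i = subgraph of edges of colour i. *)
Definition colour_sub (V : finType) (r : nat) (adj : rel V)
  (c : {set V} -> 'I_r) (i : 'I_r) : rel V :=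
  fun x y => adj x y && (c [set x; y] == i).

Definition inB (R : realType) (k r : nat) (H : 'I_r -> sgraph) (G : sgraph) :
  Prop :=
  exists c : {set sV G} -> 'I_r,
    forall i : 'I_r,
      ~ janson (pconst R k r) (pconst R k r * (vnum G)%:R)
          (Ihyp (H i) (colour_sub (sadj G) c i) (sadj G)).

Definition inB' (R : realType) (k r : nat) (H : 'I_r -> sgraph) (G : sgraph) :
  Prop :=
  exists (S : {set sV G}) (c : {set sV G} -> 'I_r),
    powR (delta R r) (2 / 3) * (vnum G)%:R <= (#|S|)%:R /\
    forall i : 'I_r,
      ~ janson (pconst R k r)
          ((2 ^+ 9)^-1 * (r%:R)^-1 * delta R r * pconst R k r * (vnum G)%:R)
          (hrestr (Ihyp (H i)
                     (colour_sub (fun x y => [&& x \in S, y \in S & sadj G x y]) c i)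
                     (sadj G)) S).

Arguments inB : clear implicits.
Arguments inB' : clear implicits.

(* Main.v *)
Require Import Defs.
From mathcomp Require Import all_boot all_order all_algebra.
From mathcomp Require Import reals exp boolp classical_sets topology normedtype derive.
From mathcomp.algebra_tactics Require Import ring lra.
Import Order.TTheory GRing.Theory Num.Theory.
Import numFieldTopology.Exports numFieldNormedType.Exports.
Set Implicit Arguments. Unset Strict Implicit. Unset Printing Implicit Defensive.
Local Open Scope ring_scope.

Section Topo.
Variables (R : realType) (m : nat).

Lemma cont_sum (I : Type) (r : seq I) (P : pred I) (f : I -> 'rV[R]_m -> R) :
  (forall i, continuous (f i)) ->
  continuous (fun v => \sum_(i <- r | P i) f i v).
Proof.
move=> fc; elim: r => [|i r IH].
  have -> : (fun v => \sum_(i <- [::] | P i) f i v) = (fun=> 0).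
    by apply: funext => v; rewrite big_nil.
  exact: cst_continuous.
have -> : (fun v => \sum_(j <- i :: r | P j) f j v) =
  (fun v => if P i then f i v + \sum_(j <- r | P j) f j v else \sum_(j <- r | P j) f j v).
  by apply: funext => v; rewrite big_cons.
case: (P i).
  by move=> v; apply: (continuousD (fc i v) (IH v)).
exact: IH.
Qed.

Lemma cont_mul (f g : 'rV[R]_m -> R) :
  continuous f -> continuous g -> continuous (fun v => f v * g v).
Proof. by move=> cf cg v; exact: (continuousM (cf v) (cg v)). Qed.

Lemma cont_sub (f g : 'rV[R]_m -> R) :
  continuous f -> continuous g -> continuous (fun v => f v - g v).
Proof. by move=> cf cg v; exact: (continuousB (cf v) (cg v)). Qed.

End Topo.

Lemma cont_sqr (R : realType) m (f : 'rV[R]_m -> R) :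
  continuous f -> continuous (fun v => f v ^+ 2).
Proof.
move=> cf; have -> : (fun v => f v ^+ 2) = (fun v => f v * f v).
  by apply: funext => v; rewrite expr2.
exact: cont_mul.
Qed.

Definition Fobj (R : realType) (V : finType) (p : R) (nu : {set V} -> R) :=
  Lambda p nu - 2 * e_nu nu.

Lemma min_box (R : realType) (V : finType) (p : R) (b : {set V} -> R) :
  (forall E, 0 <= b E) ->
  exists w : {set V} -> R, (forall E, 0 <= w E <= b E) /\
   forall nu, (forall E, 0 <= nu E <= b E) -> Fobj p w <= Fobj p nu.
Proof.
move=> hb.
pose m := #|{set V}|.
pose nuv (v : 'rV[R]_m) : {set V} -> R := fun E => v ord0 (enum_rank E).
pose A := [set v : 'rV[R]_m | forall j, `[0, b (enum_val j)]%classic (v ord0 j)]%classic.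
have cA : compact A.
  have := @rV_compact R m (fun j => `[0, b (enum_val j)]%classic)
    (fun j => @segment_compact R 0 (b (enum_val j))).
  exact.
have A0 : (A !=set0)%classic.
  by exists 0 => j /=; rewrite mxE in_itv /= lexx hb.
have cf : {within A, continuous (fun v => Fobj p (nuv v))}%classic.
  apply: continuous_subspaceT.
  rewrite /Fobj /Lambda /e_nu /d_nu /nuv.
  apply: cont_sub.
    apply: cont_sum => L; apply: cont_mul; last exact: cst_continuous.
    apply: cont_sqr; apply: cont_sum => E; exact: coord_continuous.
  apply: cont_mul; first exact: cst_continuous.
  apply: cont_sum => E; exact: coord_continuous.
have [c cA' minc] := compact_EVT_min A0 cA cf.
exists (nuv c); split.
  move=> E; move: cA'; rewrite inE /= => /(_ (enum_rank E)).
  rewrite /= enum_rankK. by rewrite in_itv /=.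
move=> nu hnu.
pose t : 'rV[R]_m := \row_j nu (enum_val j).
have -> : nu = nuv t by apply: funext => E; rewrite /nuv /t mxE enum_rankK.
apply: minc; rewrite inE /= => j. rewrite /t mxE /= in_itv /=; exact: hnu.
Qed.

Section Gen.
Variables (R : realType) (V : finType) (p : R).

Definition Mw (w : {set V} -> R) (E : {set V}) : R :=
  \sum_(L : {set V} | (2 <= #|L|)%N && (L \subset E)) d_nu w L * p ^- #|L|.
Definition KE (E : {set V}) : R :=
  \sum_(L : {set V} | (2 <= #|L|)%N && (L \subset E)) p ^- #|L|.
Definition LamS (w : {set V} -> R) (S : {set V}) : R :=
  \sum_(L : {set V} | (2 <= #|L|)%N && (L \subset S)) d_nu w L ^+ 2 * p ^- #|L|.

Lemma d_pert (w : {set V} -> R) E t L :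
  d_nu (fun F => w F + t * (F == E)%:R) L = d_nu w L + t * (L \subset E)%:R.
Proof.
rewrite /d_nu big_split /= -mulr_sumr; congr (_ + t * _).
rewrite big_mkcond (bigD1 E) //= eqxx big1 ?addr0.
  by case: (L \subset E).
by move=> F /negbTE FE; case: (L \subset F); rewrite ?FE.
Qed.

Lemma Lambda_pert (w : {set V} -> R) E t :
  Lambda p (fun F => w F + t * (F == E)%:R) =
  Lambda p w + 2 * t * Mw w E + t ^+ 2 * KE E.
Proof.
rewrite /Lambda /Mw /KE.
transitivity (\sum_(L : {set V} | (2 <= #|L|)%N)
  (d_nu w L ^+ 2 * p ^- #|L| +
   (2 * t) * (if L \subset E then d_nu w L * p ^- #|L| else 0) +
   t ^+ 2 * (if L \subset E then p ^- #|L| else 0))).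
  apply: eq_bigr => L _; rewrite d_pert.
  by case: (L \subset E); rewrite /= ?mulr1n ?mulr0n; ring.
by rewrite !big_split /= -!mulr_sumr -!big_mkcondr.
Qed.

Lemma e_pert (w : {set V} -> R) E t :
  e_nu (fun F => w F + t * (F == E)%:R) = e_nu w + t.
Proof.
rewrite /e_nu big_split /= -mulr_sumr; congr (_ + _).
rewrite (bigD1 E) //= eqxx big1 ?addr0 ?mulr1 //.
by move=> F /negbTE ->; rewrite mulr0n.
Qed.

Lemma Lambda0 : Lambda p (fun _ : {set V} => (0 : R)) = 0.
Proof.
rewrite /Lambda big1 // => L _; rewrite /d_nu big1 //.
by rewrite expr2 !mul0r.
Qed.

Lemma e0 : e_nu (fun _ : {set V} => (0 : R)) = 0.
Proof. by rewrite /e_nu big1. Qed.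

Hypothesis p0 : 0 < p.

Lemma pinv_ge0 n : 0 <= p ^- n.
Proof. by rewrite invr_ge0 exprn_ge0 // ltW. Qed.

Lemma Lambda_ge0 (nu : {set V} -> R) : 0 <= Lambda p nu.
Proof.
apply: sumr_ge0 => L _; apply: mulr_ge0; [exact: sqr_ge0 | exact: pinv_ge0].
Qed.

Lemma kkt (Gh : hypergraph V) (Rb : R) : 0 < Rb ->
  (forall nu, hweight Gh nu -> e_nu nu ^+ 2 / Rb <= Lambda p nu) ->
  exists w, hweight Gh w /\ Lambda p w <= 4 * Rb /\
     forall E, Gh E -> 1 <= Mw w E.
Proof.
move=> R0 HB.
pose b E : R := if `[< Gh E >] then 2 * Rb + 1 else 0.
have hb : forall E, 0 <= b E.
  by move=> E; rewrite /b; case: ifP => // _; lra.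
have [w [wbox wmin]] := min_box p hb.
have w0 E : 0 <= w E by case/andP: (wbox E).
have hw : hweight Gh w.
  split=> // E nE; apply/eqP; rewrite eq_le w0 andbT.
  by have := wbox E; rewrite /b asboolF // => /andP[].
have F0 : Fobj p w <= 0.
  have := wmin (fun=> 0); rewrite /Fobj Lambda0 e0 mulr0 subr0; apply.
  by move=> E; rewrite lexx hb.
have e_ge0 : 0 <= e_nu w by apply: sumr_ge0.
have Le : Lambda p w <= 2 * e_nu w by move: F0; rewrite /Fobj; lra.
have eR : e_nu w <= 2 * Rb.
  have := HB w hw; rewrite ler_pdivrMr // => H.
  have H2 : e_nu w ^+ 2 <= 2 * e_nu w * Rb.
    by apply: le_trans H _; rewrite ler_pM2r.
  rewrite expr2 in H2; nra.
exists w; split; first done. split; first lra.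
move=> E GE; rewrite leNgt; apply/negP => Mlt.
set a := 1 - Mw w E.
have a0 : 0 < a by rewrite /a; lra.
set K := KE E.
have K0 : 0 <= K by apply: sumr_ge0 => L _; exact: pinv_ge0.
set t := a / (a + K).
have aK0 : 0 < a + K by lra.
have t0 : 0 < t by apply: divr_gt0.
have tK : t * (a + K) = a by rewrite /t divfK // gt_eqF.
have t1 : t <= 1 by nra.
have wE : w E <= e_nu w.
  by rewrite /e_nu (bigD1 E) //= lerDl; apply: sumr_ge0.
have := wmin (fun F => w F + t * (F == E)%:R).
rewrite /Fobj Lambda_pert e_pert.
have box : forall F, 0 <= w F + t * (F == E)%:R <= b F.
  move=> F; case: (eqVneq F E) => [->|FE].
    rewrite /= mulr1n mulr1 /b asboolT //.
    have := w0 E; move=> ?; apply/andP; split; lra.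
  by rewrite /= mulr0n mulr0 addr0.
move=> /(_ box) H.
have : 0 <= t * (t * K - 2 * a).
  move: H; rewrite -subr_ge0 => H; apply: le_trans H _.
  by rewrite /a /K le_eqVlt; apply/orP; left; apply/eqP; ring.
nra.
Qed.

End Gen.

Lemma cauchy_schwarz (R : realType) (I : finType) (P : pred I) (c x y : I -> R) :
  (forall i, 0 <= c i) ->
  (\sum_(i | P i) x i * y i * c i) ^+ 2 <=
  (\sum_(i | P i) x i ^+ 2 * c i) * (\sum_(i | P i) y i ^+ 2 * c i).
Proof.
move=> c0.
set A := \sum_(i | P i) x i ^+ 2 * c i.
set B := \sum_(i | P i) y i ^+ 2 * c i.
set C := \sum_(i | P i) x i * y i * c i.
have B0 : 0 <= B by apply: sumr_ge0 => i _; apply: mulr_ge0 => //; exact: sqr_ge0.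
have A0 : 0 <= A by apply: sumr_ge0 => i _; apply: mulr_ge0 => //; exact: sqr_ge0.
have [Bz|Bp] := eqVneq B 0.
  have : C = 0.
    rewrite /C big1 // => i Pi.
    have := psumr_eq0P (fun i _ => mulr_ge0 (sqr_ge0 (y i)) (c0 i)) Bz Pi.
    move/eqP; rewrite mulf_eq0 sqrf_eq0 => /orP[/eqP->|/eqP->]; ring.
  by move=> ->; rewrite Bz; lra.
have Bpos : 0 < B by rewrite lt_def Bp B0.
have key : 0 <= \sum_(i | P i) (B * x i - C * y i) ^+ 2 * c i.
  by apply: sumr_ge0 => i _; apply: mulr_ge0 => //; exact: sqr_ge0.
have E : \sum_(i | P i) (B * x i - C * y i) ^+ 2 * c i =
   B ^+ 2 * A - 2 * B * C * C + C ^+ 2 * B.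
  transitivity (\sum_(i | P i) (B ^+ 2 * (x i ^+ 2 * c i)
     - 2 * B * C * (x i * y i * c i) + C ^+ 2 * (y i ^+ 2 * c i))).
    by apply: eq_bigr => i _; ring.
  by rewrite !big_split /= sumrN -!mulr_sumr.
rewrite E in key.
have : 0 <= B * (A * B - C ^+ 2).
  have -> : B * (A * B - C ^+ 2) = B ^+ 2 * A - 2 * B * C * C + C ^+ 2 * B by ring.
  exact: key.
move=> H; have : 0 <= A * B - C ^+ 2.
  by rewrite -(pmulr_rge0 _ Bpos).
lra.
Qed.

Section Gen2.
Variables (R : realType) (V : finType) (p : R).
Hypothesis p0 : 0 < p.

Lemma LamS_ge0 (w : {set V} -> R) S : 0 <= LamS p w S.
Proof.
apply: sumr_ge0 => L _; apply: mulr_ge0; [exact: sqr_ge0 | exact: pinv_ge0].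
Qed.

Lemma cs_step (Gh : hypergraph V) (w nu : {set V} -> R) (S : {set V}) :
  (forall E, Gh E -> 1 <= Mw p w E) -> hweight Gh nu ->
  (forall E, nu E != 0 -> E \subset S) ->
  e_nu nu ^+ 2 <= Lambda p nu * LamS p w S.
Proof.
move=> HM [nu0 nuz] hS.
have step1 : e_nu nu <= \sum_E nu E * Mw p w E.
  rewrite /e_nu; apply: ler_sum => E _.
  case: (eqVneq (nu E) 0) => [->|nE]; first by rewrite mul0r.
  have GE : Gh E.
    have [//|nG] := pselect (Gh E).
    by move: nE; rewrite nuz ?eqxx.
  by rewrite -{1}(mulr1 (nu E)) ler_wpM2l //; exact: HM.
have step2 : \sum_E nu E * Mw p w E =
    \sum_(L : {set V} | (2 <= #|L|)%N && (L \subset S))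
       d_nu nu L * d_nu w L * p ^- #|L|.
  rewrite /Mw.
  under eq_bigr do rewrite mulr_sumr.
  rewrite (exchange_big_dep (fun L : {set V} => (2 <= #|L|)%N)) /=;
    last by move=> E L _ /andP[].
  rewrite [RHS]big_mkcondr /=; apply: eq_bigr => L HL.
  rewrite HL /=.
  rewrite -mulr_suml -/(d_nu nu L).
  case: ifP => LS; first by rewrite mulrA.
  rewrite /d_nu big1 ?mul0r // => E LE.
  apply/eqP; case: (eqVneq (nu E) 0) => // nE; by rewrite (fintype.subset_trans LE (hS E nE)) in LS.
have step3 := cauchy_schwarz
   (fun L : {set V} => (2 <= #|L|)%N && (L \subset S))
   (d_nu nu) (d_nu w) (fun L : {set V} => pinv_ge0 p0 #|L|).
have step4 : \sum_(L : {set V} | (2 <= #|L|)%N && (L \subset S))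
       d_nu nu L ^+ 2 * p ^- #|L| <= Lambda p nu.
  rewrite /Lambda big_mkcondr /=; apply: ler_sum => L _.
  case: ifP => _ //; apply: mulr_ge0; [exact: sqr_ge0 | exact: pinv_ge0].
have e0 : 0 <= e_nu nu by apply: sumr_ge0.
rewrite step2 in step1.
have L0 := LamS_ge0 w S.
rewrite /LamS.
set X := \sum_(L | _) d_nu nu L * d_nu w L * _ in step1 step3.
set Y := \sum_(L | _) d_nu nu L ^+ 2 * _ in step3 step4.
set Z := \sum_(L | _) d_nu w L ^+ 2 * _ in step3 L0 *.
have : e_nu nu ^+ 2 <= X ^+ 2 by rewrite !expr2; nra.
move=> H1; apply: le_trans H1 _; apply: le_trans step3 _.
by rewrite ler_wpM2r.
Qed.

End Gen2.

Lemma count_sup (V : finType) (L : {set V}) (s : nat) : (2 <= #|L|)%N ->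
  (#|[set S : {set V} | (#|S| == s) && (L \subset S)]| <= 'C(#|V| - 2, s - 2))%N.
Proof.
move=> /card_gt1P [x [y [xL yL xy]]].
set X := [set x; y].
have XL : X \subset L by apply/fintype.subsetP => z; rewrite !inE => /orP[]/eqP->.
set P := [set S : {set V} | (#|S| == s) && (L \subset S)].
have XS S : S \in P -> X \subset S.
  by rewrite inE => /andP[_ LS]; exact: fintype.subset_trans XL LS.
have inj : {in P &, injective (fun S => S :\: X)}.
  move=> S1 S2 P1 P2 /= E.
  rewrite -(finset.setID S1 X) -(finset.setID S2 X) E.
  by rewrite (finset.setIidPr (XS _ P1)) (finset.setIidPr (XS _ P2)).
rewrite -(card_in_imset inj).
have cX : #|X| = 2 by rewrite cards2 xy.
have -> : (#|V| - 2 = #|~: X|)%N by rewrite -(cardsC X) cX addKn.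
rewrite -cards_draws; apply: subset_leq_card; apply/fintype.subsetP => B.
move=> /imsetP [S PS ->]; rewrite inE; apply/andP; split.
  by apply/fintype.subsetP => z; rewrite !inE => /andP[].
have := PS; rewrite inE => /andP[/eqP <- _].
by rewrite cardsD (finset.setIidPr (XS _ PS)) cX.
Qed.

Lemma bin_ratio (n s : nat) : (2 <= s)%N -> (s <= n)%N ->
  ('C(n, s) * (s * (s - 1)) = 'C(n - 2, s - 2) * (n * (n - 1)))%N.
Proof.
case: s => [|[|s]] // _; case: n => [|[|n]] //=.
rewrite !subn2 /= !subn1 /= => _.
have h1 := mul_bin_diag n.+2 s.+1.
have h2 := mul_bin_diag n.+1 s.
rewrite /= in h1 h2.
rewrite [in LHS]mulnA [in LHS](mulnC 'C(_,_)) -h1.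
rewrite -mulnA (mulnC 'C(n.+1, s.+1)) -h2.
by rewrite mulnA mulnC.
Qed.

Lemma avg (R : realType) (V : finType) (g : {set V} -> R) (s : nat) (th : R) :
  (forall L, 0 <= g L) -> (s <= #|V|)%N -> 0 <= th ->
  (s * (s - 1))%:R <= th * (#|V| * (#|V| - 1))%:R ->
  exists S : {set V}, #|S| = s /\
    \sum_(L : {set V} | (2 <= #|L|)%N && (L \subset S)) g L <=
    th * \sum_(L : {set V} | (2 <= #|L|)%N) g L.
Proof.
move=> g0 sn t0 hst.
set P := [set S : {set V} | #|S| == s].
have cP : #|P| = 'C(#|V|, s) := card_draws V s.
have P0 : (0 < #|P|)%N by rewrite cP bin_gt0.
set G := \sum_(L : {set V} | (2 <= #|L|)%N) g L.
have G0 : 0 <= G by apply: sumr_ge0.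
have [S0 PS0] : exists S, S \in P by apply/card_gt0P.
case: (leqP s 1) => s1.
  exists S0; split; first by move: PS0; rewrite inE => /eqP.
  rewrite big1; first exact: mulr_ge0.
  move=> L /andP [L2 LS]; exfalso.
  have := subset_leq_card LS; move: PS0; rewrite inE => /eqP ->.
  move=> h; have := leq_trans L2 (leq_trans h s1); by [].
case: (pselect (exists S, S \in P /\
   \sum_(L : {set V} | (2 <= #|L|)%N && (L \subset S)) g L <= th * G)).
  by move=> [S [PS H]]; exists S; split => //; move: PS; rewrite inE => /eqP.
move=> N; exfalso.
have lt : forall S, S \in P ->
    th * G < \sum_(L : {set V} | (2 <= #|L|)%N && (L \subset S)) g L.
  by move=> S PS; rewrite ltNge; apply/negP => H; apply: N; exists S.
have hasP : has (fun S => S \in P) (index_enum {set V}).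
  by apply/hasP; exists S0 => //; rewrite mem_index_enum.
have H1 := ltr_sum hasP lt.
rewrite sumr_const in H1.
rewrite (exchange_big_dep (fun L : {set V} => (2 <= #|L|)%N)) /= in H1;
  last by move=> S L _ /andP[].
have H2 : \sum_(L : {set V} | (2 <= #|L|)%N)
     \sum_(S | (S \in P) && ((2 <= #|L|)%N && (L \subset S))) g L <=
     G * ('C(#|V| - 2, s - 2))%:R.
  rewrite /G mulr_suml; apply: ler_sum => L L2; rewrite L2 /=.
  have -> : \sum_(S | (S \in P) && (L \subset S)) g L =
      g L *+ #|[set S : {set V} | (#|S| == s) && (L \subset S)]|.
    by rewrite -sumr_const; apply: eq_bigl => S; rewrite !inE.
  rewrite -(mulr_natr (g L)); apply: ler_wpM2l => //; rewrite ler_nat.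
  exact: count_sup.
have s2 : (2 <= s)%N by [].
have br := bin_ratio s2 sn.
have := congr1 (fun k : nat => k%:R : R) br; rewrite !natrM => br'.
have v0 : 0 < (#|V| * (#|V| - 1))%:R :> R.
  rewrite ltr0n muln_gt0; apply/andP; split.
    exact: leq_trans (ltnW s2) sn.
  by rewrite subn_gt0; exact: leq_trans s2 sn.
rewrite natrM in v0 hst.
rewrite cP -mulr_natr in H1.
have := lt_le_trans H1 H2.
set a := ('C(#|V|, s))%:R : R.
set b := ('C(#|V| - 2, s - 2))%:R : R.
have a0 : 0 <= a by [].
set u1 := (s%:R : R). set u2 := ((s - 1)%:R : R).
set v1 := ((#|V|)%:R : R). set v2 := ((#|V| - 1)%:R : R).
move=> H3.
have hb : b <= th * a.
  have : b * (v1 * v2) <= th * a * (v1 * v2) by nra.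
  by rewrite ler_pM2r.
nra.
Qed.

Lemma arith (R : realType) (r : nat) : (2 <= r)%N ->
  let q := powR (delta R r) (2 / 3) in
  0 <= q /\ q < 1 /\
  16 * r%:R * q ^+ 2 <= (2 ^+ 9)^-1 * (r%:R)^-1 * delta R r.
Proof.
move=> r2 q.
set x : R := r%:R.
have x2 : 2 <= x by rewrite /x (ler_nat R 2 r).
have x0 : 0 < x by lra.
set d := delta R r.
have dE : d = (x ^+ 50)^-1 by [].
have d0 : 0 < d by rewrite dE invr_gt0 exprn_gt0.
set t := powR d (3^-1).
have t0 : 0 <= t by apply: powR_ge0.
have qE : q = t ^+ 2.
  rewrite /q /t -powR_mulrn // -powRrM; congr powR.
  by rewrite mulrC.
have t3 : t ^+ 3 = d.
  rewrite /t -powR_mulrn // -powRrM mulVf ?powRr1 //; first exact: ltW.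
  by rewrite pnatr_eq0.
have d1 : d < 1.
  rewrite dE invf_lt1 ?exprn_gt0 //.
  have : 2 ^+ 50 <= x ^+ 50 by rewrite lerXn2r // ?nnegrE; lra.
  have : 1 < (2 : R) ^+ 50 by rewrite exprn_egt1 //; lra.
  lra.
have t1 : t < 1.
  rewrite ltNge; apply/negP => ht.
  have : 1 <= t ^+ 3 by rewrite exprn_ege1.
  lra.
split; first by rewrite qE; exact: sqr_ge0.
split; first by rewrite qE; nra.
set y := 2 ^+ 13 * x ^+ 2 * t.
have y0 : 0 <= y by rewrite /y; apply: mulr_ge0 => //; apply: mulr_ge0; apply: exprn_ge0; lra.
have y3 : y ^+ 3 <= 1.
  have -> : y ^+ 3 = 2 ^+ 39 * x ^+ 6 * d.
    by rewrite -t3 /y; ring.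
  rewrite dE.
  have hx : x ^+ 50 = x ^+ 6 * x ^+ 44 by rewrite -exprD.
  rewrite hx invfM -mulrA (mulrA (x ^+ 6)) mulfV ?expf_neq0 ?gt_eqF // mul1r.
  rewrite ler_pdivrMr ?exprn_gt0 // mul1r.
  have : 2 ^+ 44 <= x ^+ 44 by rewrite lerXn2r // ?nnegrE; lra.
  have : (2 : R) ^+ 39 <= 2 ^+ 44 by rewrite ler_eXn2l //; lra.
  lra.
have y1 : y <= 1.
  rewrite leNgt; apply/negP => hy.
  have : 1 < y ^+ 3 by rewrite exprn_egt1.
  lra.
rewrite qE -t3.
rewrite -(ler_pM2l (_ : 0 < 2 ^+ 9 * x)); last by apply: mulr_gt0 => //; exact: exprn_gt0.
have -> : 2 ^+ 9 * x * ((2 ^+ 9)^-1 * x^-1 * t ^+ 3) = t ^+ 3.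
  by field; rewrite gt_eqF.
have -> : 2 ^+ 9 * x * (16 * x * (t ^+ 2) ^+ 2) = y * t ^+ 3 by rewrite /y; ring.
rewrite ler_piMl //; exact: exprn_ge0.
Qed.

Lemma Lambda_ge0' (R : realType) (V : finType) (p : R) (nu : {set V} -> R) :
  0 <= p -> 0 <= Lambda p nu.
Proof.
move=> p0; apply: sumr_ge0 => L _; apply: mulr_ge0; first exact: sqr_ge0.
by rewrite invr_ge0 exprn_ge0.
Qed.

Theorem lemma6p2 (R : realType) (k r : nat) (hr : (2 <= r)%N)
  (H : 'I_r -> sgraph) (G : sgraph) :
  inB R k r H G -> inB' R k r H G.
Proof.
move=> [c hc].
have [q0 [q1 qbound]] := arith R hr.
set q := powR (delta R r) (2 / 3) in q0 q1 qbound *.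
set p := pconst R k r in hc *.
set n := vnum G in hc *.
have p0 : 0 <= p.
  by rewrite /p /pconst invr_ge0; apply: mulr_ge0; [apply: mulr_ge0|];
     apply: exprn_ge0.
have d0 : 0 < delta R r.
  by rewrite /delta invr_gt0 exprn_gt0 // ltr0n; exact: leq_trans _ hr.
have rpos : 0 < r%:R :> R by rewrite ltr0n; exact: leq_trans _ hr.
set Rp := (2 ^+ 9)^-1 * (r%:R)^-1 * delta R r * p * n%:R.
have RpE : Rp = (2 ^+ 9)^-1 * (r%:R)^-1 * delta R r * (p * n%:R) by rewrite /Rp mulrA.
case: (ltrP 0 (p * n%:R)) => pn.
  have pp : 0 < p.
    rewrite lt_def p0 andbT; apply/negP => /eqP p00.
    by move: pn; rewrite p00 mul0r ltxx.
  have npos : (0 < n)%N.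
    rewrite lt0n; apply/negP => /eqP n00.
    by move: pn; rewrite n00 mulr0 ltxx.
  set I := fun i => Ihyp (H i) (colour_sub (sadj G) c i) (sadj G).
  have W : forall i : 'I_r, exists w : {set sV G} -> R,
      hweight (I i) w /\ Lambda p w <= 4 * (p * n%:R) /\
      forall E, I i E -> 1 <= Mw p w E.
    move=> i; apply: kkt => // nu hw.
    rewrite leNgt; apply/negP => Hlt; apply: (hc i); exists nu; split => //.
  have [w Hw] := fin_all_exists W.
  set s := (Num.truncn (q * n%:R)).+1.
  have qn0 : 0 <= q * n%:R by apply: mulr_ge0.
  have sgt : q * n%:R < s%:R by apply: truncnS_gt.
  have sn : (s <= n)%N.
    rewrite /s truncn_lt_nat //.
    rewrite -[X in _ < X]mul1r ltr_pM2r //; by rewrite ltr0n.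
  set th : R := 4 * q ^+ 2.
  have th0 : 0 <= th by rewrite /th; apply: mulr_ge0 => //; exact: sqr_ge0.
  have hst : (s * (s - 1))%:R <= th * (n * (n - 1))%:R.
    case: (leqP s 1) => s1.
      have -> : (s * (s - 1) = 0)%N.
        by apply/eqP; rewrite muln_eq0 subn_eq0 s1 orbT.
      by apply: mulr_ge0.
    have A1 : 1 <= (s - 1)%:R :> R by rewrite ler1n subn_gt0.
    have Aq : (s - 1)%:R <= q * n%:R.
      by rewrite /s subSS subn0 truncn_le.
    have sE : s%:R = (s - 1)%:R + 1 :> R by rewrite /s subSS subn0 natr1.
    have N2 : 2 <= n%:R :> R by rewrite ler_nat; exact: leq_trans s1 sn.
    have nE : (n - 1)%:R = n%:R - 1 :> R by rewrite natrB // ltnW.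
    rewrite !natrM sE nE /th.
    set A := (s - 1)%:R in A1 Aq *. set N := n%:R in N2 *.
    have h1 : (A + 1) * A <= 2 * (A * A) by nra.
    have h2 : A * A <= (q * N) * (q * N).
      by apply: ler_pM => //; lra.
    have h3 : N * N <= 2 * (N * (N - 1)) by nra.
    have h4 : 0 <= q ^+ 2 by exact: sqr_ge0.
    have h5 : q ^+ 2 * (N * N) <= q ^+ 2 * (2 * (N * (N - 1))).
      by apply: ler_wpM2l.
    have -> : 4 * q ^+ 2 * (N * (N - 1)) = 2 * (q ^+ 2 * (2 * (N * (N - 1)))) by ring.
    have e2 : (q * N) * (q * N) = q ^+ 2 * (N * N) by ring.
    rewrite e2 in h2.
    lra.
  pose g := fun L : {set sV G} => \sum_(i < r) d_nu (w i) L ^+ 2 * p ^- #|L|.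
  have g0 : forall L, 0 <= g L.
    move=> L; apply: sumr_ge0 => i _; apply: mulr_ge0; [exact: sqr_ge0|exact: pinv_ge0].
  have [S [cS HS]] := avg g0 sn th0 hst.
  have Gsum : \sum_(L : {set sV G} | (2 <= #|L|)%N) g L <= r%:R * (4 * (p * n%:R)).
    rewrite /g exchange_big /=.
    have -> : r%:R * (4 * (p * n%:R)) = \sum_(i < r) 4 * (p * n%:R).
      by rewrite sumr_const card_ord mulr_natl.
    apply: ler_sum => i _; case: (Hw i) => _ [HL _]; exact: HL.
  have LS : forall i, LamS p (w i) S <= Rp.
    move=> i.
    have h1 : LamS p (w i) S <= \sum_(L : {set sV G} | (2 <= #|L|)%N && (L \subset S)) g L.
      apply: ler_sum => L _; rewrite /g (bigD1 i) //= lerDl.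
      apply: sumr_ge0 => j _; apply: mulr_ge0; [exact: sqr_ge0|exact: pinv_ge0].
    apply: le_trans h1 _; apply: le_trans HS _.
    apply: le_trans (ler_wpM2l th0 Gsum) _.
    rewrite RpE /th.
    have pn0 : 0 <= p * n%:R by exact: ltW.
    have : 16 * r%:R * q ^+ 2 * (p * n%:R) <=
           2 ^- 9 / r%:R * delta R r * (p * n%:R) by apply: ler_wpM2r.
    set Z := p * n%:R.
    have -> : 4 * q ^+ 2 * (r%:R * (4 * Z)) = 16 * r%:R * q ^+ 2 * Z by ring.
    done.
  have Rp0 : 0 < Rp.
    rewrite RpE; apply: mulr_gt0 => //; apply: mulr_gt0 => //; apply: mulr_gt0.
      by rewrite invr_gt0 exprn_gt0.
    by rewrite invr_gt0.
  exists S, c; split.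
    by rewrite cS; exact: ltW.
  move=> i [nu [[nu0 nuz] Hlt]].
  set J := hrestr _ S in nuz.
  have JI : forall E, J E -> I i E.
    move=> E [[Hadj Hiso] ES]; split => // x y xL yL.
    rewrite -(Hadj x y xL yL) /colour_sub.
    by rewrite (fintype.subsetP ES x xL) (fintype.subsetP ES y yL).
  have hw : hweight (I i) nu.
    split => // E nE; apply: nuz => /JI; exact: nE.
  have supp : forall E, nu E != 0 -> E \subset S.
    move=> E nE; have [[_ ES]|nJ] := pselect (J E); first exact: ES.
    by move: nE; rewrite nuz // eqxx.
  case: (Hw i) => _ [_ HM].
  have CS := cs_step pp HM hw supp.
  have := LS i => Hl.
  have : e_nu nu ^+ 2 <= Lambda p nu * Rp.
    apply: le_trans CS _; apply: ler_wpM2l => //; exact: Lambda_ge0.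
  rewrite -ler_pdivrMr // => H2.
  move: Hlt; rewrite -/Rp => Hlt.
  by have := lt_le_trans Hlt H2; rewrite ltxx.
have pn0 : p * n%:R = 0 by apply/eqP; rewrite eq_le pn /=; apply: mulr_ge0.
exists [set: sV G], c; split.
  rewrite cardsT -[X in _ <= X]mul1r; apply: ler_wpM2r; [exact: ler0n | exact: ltW q1].
move=> i [nu [_ Hlt]].
rewrite -/Rp RpE pn0 mulr0 invr0 mulr0 in Hlt.
have := Lambda_ge0' nu p0; lra.
Qed.
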